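(* Let $D$ be a digraph with arc-strong connectivity $\ell=\lambda(D)$ and let $k\ge 2$ be an integer with $k\le \ell$. Then $\lambda_k(D)\ge\lfloor \ell/k\rfloor$.
   Context: Digraphs are finite, without loops or parallel arcs. $\lambda(D)$ is the arc-strong connectivity of $D$. For $S\subseteq V(D)$, $\lambda_S(D)$ is the maximum number of pairwise arc-disjoint strong subgraphs of $D$ containing $S$, and $\lambda_k(D)=\min\{\lambda_S(D): S\subseteq V(D), |S|=k\}$. *)

(* Defs.v *)
(* A digraph is a finite vertex type T with an arc relation
   A : rel T (no parallel arcs by construction; no loops = irreflexive A). *)
From mathcomp Require Import all_boot.
Set Implicit Arguments. Unset Strict Implicit. Unset Printing Implicit Defensive.

Section Digraphs.
Variable T : finType.

Definition arcset (A : rel T) : {set T * T} := [set a | A a.1 a.2].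

Definition arel (B : {set T * T}) : rel T := fun x y => (x, y) \in B.

Definition strong_digraph (A : rel T) : Prop :=
  forall u v : T, connect A u v.

Definition del_arcs (A : rel T) (X : {set T * T}) : rel T :=
  fun x y => A x y && ((x, y) \notin X).

Definition k_arc_strong (A : rel T) (k : nat) : Prop :=
  forall X : {set T * T}, X \subset arcset A -> #|X| < k ->
    strong_digraph (del_arcs A X).

Definition arc_strong_connectivity (A : rel T) (l : nat) : Prop :=
  k_arc_strong A l /\ ~ k_arc_strong A l.+1.

Definition subdigraph (A : rel T) (V : {set T}) (B : {set T * T}) : Prop :=
  B \subset arcset A /\ (forall a, a \in B -> (a.1 \in V) && (a.2 \in V)).

Definition strong_sub (V : {set T}) (B : {set T * T}) : Prop :=
  forall u v, u \in V -> v \in V -> connect (arel B) u v.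

Definition strong_sub_containing (A : rel T) (S V : {set T}) (B : {set T * T})
  : Prop := subdigraph A V B /\ strong_sub V B /\ S \subset V.

Definition lambdaS_ge (A : rel T) (S : {set T}) (m : nat) : Prop :=
  exists (V : 'I_m -> {set T}) (B : 'I_m -> {set T * T}),
    (forall i, strong_sub_containing A S (V i) (B i)) /\
    (forall i j, i != j -> [disjoint B i & B j]).

Definition lambdak_ge (A : rel T) (k m : nat) : Prop :=
  forall S : {set T}, #|S| = k -> lambdaS_ge A S m.

End Digraphs.

(* Main.v *)
Require Import Defs.
From mathcomp Require Import all_boot zify.
Set Implicit Arguments. Unset Strict Implicit. Unset Printing Implicit Defensive.

Section Aux.
Variable T : finType.
Implicit Types (E B F R : {set T * T}) (X Y N Q : {set T}).

Definition indeg E X : nat := \sum_(a in E) ((a.1 \notin X) && (a.2 \in X) : nat).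
Definition cnt (s : seq T) X := count (fun x => x \notin X) s.

Lemma indeg_sub E X N :
  indeg E (X :&: N) + indeg E (X :|: N) <= indeg E X + indeg E N.
Proof.
rewrite /indeg -!big_split /=; apply: leq_sum => a _; rewrite !inE.
by case: (a.1 \in X); case: (a.1 \in N); case: (a.2 \in X); case: (a.2 \in N).
Qed.

Lemma cnt_mod s X N : cnt s (X :&: N) + cnt s (X :|: N) = cnt s X + cnt s N.
Proof.
rewrite /cnt; elim: s => //= x s IH; rewrite !inE.
by case: (x \in X); case: (x \in N) => /=; lia.
Qed.

Lemma cnt_mono s X Y : X \subset Y -> cnt s Y <= cnt s X.
Proof.
move=> /subsetP sXY; rewrite /cnt; elim: s => //= x s IH.
case hY: (x \in Y) => /=; first by lia.
by have -> : x \notin X by apply/negP => /sXY; rewrite hY.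
Qed.

Lemma cnt_setT s : cnt s setT = 0.
Proof. by rewrite /cnt; elim: s => //= x s ->; rewrite inE. Qed.

Lemma cnt_size s X : cnt s X <= size s.
Proof. exact: count_size. Qed.

Lemma indeg_del E X a : a \in E ->
  indeg E X = indeg (E :\ a) X + ((a.1 \notin X) && (a.2 \in X)).
Proof.
move=> aE; rewrite /indeg (bigD1 a) //= addnC; congr (_ + _).
by apply: eq_bigl => b; rewrite !inE andbC.
Qed.

Lemma indeg_pos E (P : pred (T * T)) :
  0 < \sum_(a in E) (P a : nat) -> exists2 a, a \in E & P a.
Proof.
move=> H; case: (boolP [exists a in E, P a]) => [/existsP[a /andP[]]|/existsPn Hn].
  by exists a.
move: H; rewrite big1 // => a aE.
by have := Hn a; rewrite aE /=; case: (P a).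
Qed.

Lemma indeg_outside B F X : (forall a, a \in F -> a.2 \notin X) ->
  indeg (B :\: F) X = indeg B X.
Proof.
move=> HF; rewrite /indeg [in RHS](bigID (fun a => a \in F)) /=.
have -> : \sum_(i in B | i \in F) ((i.1 \notin X) && (i.2 \in X) : nat) = 0.
  by apply: big1 => a /andP[_ aF]; rewrite (negbTE (HF a aF)) andbF.
rewrite add0n; by apply: eq_bigl => a; rewrite !inE andbC.
Qed.

Lemma connect_mono E E' x y : E \subset E' ->
  connect (arel E) x y -> connect (arel E') x y.
Proof.
move=> /subsetP sE; apply: connect_sub => u v /= Huv.
by apply: connect1; rewrite /arel sE.
Qed.

Lemma crossing (e : rel T) X u v : connect e u v -> u \notin X -> v \in X ->
  exists x y, [/\ e x y, x \notin X & y \in X].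
Proof.
move=> /connectP[p Hp ->]; elim: p u Hp => [|w p IH] u /=.
  by move=> _ /negbTE ->.
move=> /andP[euw Hp] uX lX.
case wX: (w \in X); first by exists u, w.
by apply: (IH w Hp) => //; rewrite wX.
Qed.

End Aux.

Section Step.
Variable T : finType.
Implicit Types (E B F R : {set T * T}) (X Y N Q : {set T}).

Lemma step B F Q x0 s :
 (forall X, X != set0 -> cnt s X + (x0 \notin X) <= indeg B X) ->
 x0 \in Q -> (forall a, a \in F -> a.2 \in Q) ->
 (forall X, X != set0 -> cnt s X <= indeg (B :\: F) X) ->
 Q != setT ->
 exists u v, [/\ (u, v) \in B :\: F, u \in Q, v \notin Q &
   forall X, X != set0 -> cnt s X <= indeg ((B :\: F) :\ (u, v)) X].
Proof.
move=> HB x0Q FQ Inv QT.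
set R := B :\: F.
have outside : forall Z : {set T}, Z \subset ~: Q -> Z != set0 -> cnt s Z < indeg R Z.
  move=> Z /subsetP sZ Zn; rewrite /R indeg_outside.
    have := HB Z Zn.
    have -> : x0 \notin Z by apply/negP => /sZ; rewrite inE x0Q.
    by rewrite addn1.
  move=> a /FQ aQ; apply/negP => /sZ; by rewrite inE aQ.
have good : forall u v : T, (u, v) \in R ->
    (forall X, X != set0 -> v \in X -> u \notin X -> indeg R X != cnt s X) ->
    forall X, X != set0 -> cnt s X <= indeg (R :\ (u, v)) X.
  move=> u v uvR Hg X Xn.
  have := Inv X Xn; rewrite -/R (indeg_del X uvR) /=.
  case: (boolP (u \notin X)) => uX; case: (boolP (v \in X)) => vX /=; rewrite ?addn0 ?addn1 //.
  have := Hg X Xn vX uX; rewrite (indeg_del X uvR) /= uX vX /= addn1.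
  move=> H1 H2; rewrite -ltnS ltn_neqAle H2 andbT eq_sym //.
pose P := fun X : {set T} => [&& X != set0, indeg R X == cnt s X & ~~ (X \subset Q)].
case: (pickP P) => [X0 PX0 | none].
- case: (arg_minnP (fun X : {set T} => #|X|) PX0) => N PN minN.
  move/and3P: PN => [Nn /eqP NT NQ].
  set Z := N :\: Q.
  have [w wZ] : exists w, w \in Z.
    by move/subsetPn: NQ => [w wN wQ]; exists w; rewrite inE wN wQ.
  have Zn : Z != set0 by apply/set0Pn; exists w.
  have hZ := outside Z (subsetDr _ _) Zn.
  have hc : cnt s N <= cnt s Z by apply: cnt_mono; apply: subsetDl.
  have ineq : indeg R Z <= indeg R N +
     \sum_(a in R) ([&& a.1 \in N, a.1 \in Q & a.2 \in Z] : nat).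
    rewrite /indeg -big_split /=; apply: leq_sum => a _; rewrite /Z !inE.
    by case: (a.1 \in N); case: (a.1 \in Q); case: (a.2 \in N); case: (a.2 \in Q).
  have [[u v] uvR /and3P[uN uQ vZ]] : exists2 a, a \in R & [&& a.1 \in N, a.1 \in Q & a.2 \in Z].
    apply: indeg_pos; lia.
  move: vZ; rewrite /Z inE => /andP[vQ vN].
  exists u, v; split => //; apply: good => // X Xn vX uX; apply/negP => /eqP XT.
  have XNn : X :&: N != set0 by apply/set0Pn; exists v; rewrite inE vX vN.
  have XUn : X :|: N != set0 by apply/set0Pn; exists v; rewrite inE vX.
  have := indeg_sub R X N; have := cnt_mod s X N.
  have := Inv _ XNn; have := Inv _ XUn; rewrite -/R => h1 h2 h3 h4.
  have e1 : indeg R (X :&: N) = cnt s (X :&: N).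
    move: h1 h2 h3 h4 XT NT.
    move: (indeg R (X :&: N)) (indeg R (X :|: N)) (indeg R X) (indeg R N).
    move: (cnt s (X :&: N)) (cnt s (X :|: N)) (cnt s X) (cnt s N).
    clear; lia.
  have PXN : P (X :&: N).
    apply/and3P; split => //; first by apply/eqP.
    by apply/subsetPn; exists v; rewrite ?inE ?vX ?vN.
  have := minN _ PXN.
  have : X :&: N \proper N.
    by apply/properP; split; [apply: subsetIr | exists u; rewrite ?inE ?(negbTE uX)].
  move/proper_card; move: (#|X :&: N|) (#|N|); clear; lia.
- have [v vQ] : exists v, v \notin Q.
    case: (boolP [forall v, v \in Q]) => [/forallP allQ | /forallPn [v vQ]]; last by exists v.
    have QT' : Q = setT by apply/setP => v; rewrite inE allQ.
    by rewrite QT' eqxx in QT.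
  have Zn : ~: Q != set0 by apply/set0Pn; exists v; rewrite inE.
  have hZ := outside _ (subxx _) Zn.
  have [[u w] uwR] : exists2 a, a \in R & (a.1 \notin ~: Q) && (a.2 \in ~: Q).
    apply: indeg_pos; rewrite -/(indeg R (~: Q)); lia.
  rewrite !inE negbK => /andP[uQ wQ].
  exists u, w; split => //; apply: good => // X Xn wX uX; apply/negP => XT.
  have := none X; rewrite /P Xn XT /=.
  by move/negbT/negPn => /subsetP /(_ w wX); rewrite (negbTE wQ).
Qed.

End Step.

Section Grow.
Variable T : finType.
Implicit Types (E B F R : {set T * T}) (X Y N Q : {set T}).

Lemma grow B x0 s :
 (forall X, X != set0 -> cnt s X + (x0 \notin X) <= indeg B X) ->
 forall n Q F, #|~: Q| <= n -> x0 \in Q -> F \subset B ->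
 (forall a, a \in F -> a.2 \in Q) ->
 (forall v, v \in Q -> connect (arel F) x0 v) ->
 (forall X, X != set0 -> cnt s X <= indeg (B :\: F) X) ->
 exists F', [/\ F' \subset B, (forall v, connect (arel F') x0 v) &
   forall X, X != set0 -> cnt s X <= indeg (B :\: F') X].
Proof.
move=> HB; elim=> [|n IH] Q F hn x0Q FB FQ Fc Inv.
  exists F; split => // v; apply: Fc.
  by move: hn; rewrite leqn0 cards_eq0 => /eqP/setP/(_ v); rewrite !inE => /negbFE.
case: (boolP (Q == setT)) => [/eqP QT | QT].
  by exists F; split => // v; apply: Fc; rewrite QT inE.
have [u [v [uvR uQ vQ Inv']]] := step HB x0Q FQ Inv QT.
move: (uvR); rewrite inE => /andP[uvF uvB].
have eqD : B :\: ((u, v) |: F) = (B :\: F) :\ (u, v).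
  by apply/setP => a; rewrite !inE negb_or andbA.
apply: (IH (v |: Q) ((u, v) |: F)).
- have : ~: (v |: Q) \proper ~: Q.
    apply/properP; split; first by apply/subsetP => x; rewrite !inE negb_or => /andP[].
    by exists v; rewrite !inE ?eqxx.
  move/proper_card; move: hn; move: (#|~: (v |: Q)|) (#|~: Q|); clear; lia.
- by rewrite in_setU1 x0Q orbT.
- by apply/subsetP => a /setU1P [-> // | /(subsetP FB)].
- move=> a /setU1P [-> | aF]; rewrite in_setU1 ?eqxx // (FQ a aF) orbT //.
- move=> w /setU1P [-> | wQ].
    apply: (connect_trans (y := u)).
      by apply: connect_mono (Fc _ uQ); apply: subsetUr.
    by apply: connect1; rewrite /arel in_setU1 eqxx.
  by apply: connect_mono (Fc _ wQ); apply: subsetUr.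
- by rewrite eqD.
Qed.

Lemma link (s : seq T) : forall B,
  (forall X, X != set0 -> cnt s X <= indeg B X) ->
  exists Fs : nat -> {set T * T},
    [/\ forall i, Fs i \subset B,
        forall i j, i < size s -> j < size s -> i != j -> [disjoint Fs i & Fs j] &
        forall i d v, i < size s -> connect (arel (Fs i)) (nth d s i) v].
Proof.
elim: s => [|x0 s IH] B HB.
  by exists (fun _ => set0); split => // i; rewrite sub0set.
have HB' : forall X, X != set0 -> cnt s X + (x0 \notin X) <= indeg B X.
  by move=> X Xn; have := HB X Xn; rewrite /cnt /= addnC.
have [F0 [F0B F0c Inv]] : exists F', [/\ F' \subset B, (forall v, connect (arel F') x0 v) &
   forall X, X != set0 -> cnt s X <= indeg (B :\: F') X].
  have h1 : x0 \in [set x0] := set11 x0.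
  have h2 : set0 \subset B by rewrite sub0set.
  have h3 : forall a : T * T, a \in set0 -> a.2 \in [set x0] by move=> a; rewrite in_set0.
  have h4 : forall v, v \in [set x0] -> connect (arel set0) x0 v.
    by move=> v /set1P ->; apply: connect0.
  have h5 : forall X, X != set0 -> cnt s X <= indeg (B :\: set0) X.
    by move=> X Xn; rewrite setD0; have := HB' X Xn; lia.
  exact: (grow HB' (leqnn _) h1 h2 h3 h4 h5).
have [Fs [FsB Fsd Fsc]] := IH _ Inv.
exists (fun i => if i is i'.+1 then Fs i' else F0); split.
- case=> [|i] //; apply: subset_trans (FsB i) _; apply: subsetDl.
- have dj : forall i, [disjoint Fs i & F0].
    move=> i; rewrite disjoint_subset; apply: subset_trans (FsB i) _.
    by apply/subsetP => a; rewrite !inE => /andP[].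
  case=> [|i] [|j] //= hi hj hij.
  + by rewrite disjoint_sym.
  + exact: Fsd.
- by case=> [|i] d v //= hi; apply: Fsc.
Qed.

End Grow.

Section Main.
Variable T : finType.

Definition compC (E : {set T * T}) (y0 : T) : {set T} :=
  [set w | connect (arel E) y0 w && connect (arel E) w y0].
Definition restrC (E : {set T * T}) (y0 : T) : {set T * T} :=
  [set a in E | (a.1 \in compC E y0) && (a.2 \in compC E y0)].

Lemma lift_strong (E : {set T * T}) y0 u v :
  u \in compC E y0 -> v \in compC E y0 -> connect (arel E) u v ->
  connect (arel (restrC E y0)) u v.
Proof.
move=> uC vC /connectP [p Hp Hv]; move: vC; rewrite Hv => {Hv v}.
elim: p u uC Hp => [|w p IH] u uC /=; first by rewrite connect0.
move=> /andP [euw Hp] vC.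
have wC : w \in compC E y0.
  move: uC vC; rewrite !inE => /andP[y0u uy0] /andP[y0v vy0].
  apply/andP; split; first by apply: connect_trans y0u (connect1 euw).
  apply: connect_trans vy0; apply/connectP; by exists p.
apply: connect_trans (IH w wC Hp vC).
by apply: connect1; rewrite /arel /restrC inE; apply/and3P; split.
Qed.

Lemma indeg_card (E : {set T * T}) X :
  indeg E X = #|[set a in E | (a.1 \notin X) && (a.2 \in X)]|.
Proof.
rewrite /indeg -sum1_card [RHS]big_mkcond [LHS]big_mkcond /=.
apply: eq_bigr => a _; rewrite inE.
by case: (a \in E); case: ((a.1 \notin X) && (a.2 \in X)).
Qed.

End Main.

Theorem proposition3p9 (T : finType) (A : rel T) (l k : nat) :
  irreflexive A ->
  arc_strong_connectivity A l ->
  2 <= k -> k <= l ->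
  lambdak_ge A k (l %/ k).
Proof.
move=> _ [Hl _] k2 kl S cardS.
set m := l %/ k.
have k0 : 0 < k by lia.
have [d dS] : exists d, d \in S.
  by apply/set0Pn; rewrite -card_gt0 cardS.
set e := enum S.
have se : size e = k by rewrite /e -cardE.
set s := mkseq (fun i => nth d e (i %% k)) (m * k).
have ss : size s = m * k by rewrite size_mkseq.
have cut : forall X, X != set0 -> cnt s X <= indeg (arcset A) X.
  move=> X Xn; case: (boolP (X == setT)) => [/eqP -> | XT]; first by rewrite cnt_setT.
  apply: leq_trans (cnt_size _ _) _; rewrite ss.
  apply: leq_trans (leq_divM l k) _.
  rewrite leqNgt; apply/negP => lt.
  set Y := [set a in arcset A | (a.1 \notin X) && (a.2 \in X)].
  have YA : Y \subset arcset A by apply/subsetP => a; rewrite inE => /andP[].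
  have str := Hl Y YA; rewrite -indeg_card in str.
  have [u uX] : exists u, u \notin X.
    case: (boolP [forall v, v \in X]) => [/forallP allX | /forallPn [u uX]]; last by exists u.
    have XT' : X = setT by apply/setP => v; rewrite inE allX.
    by rewrite XT' eqxx in XT.
  have [v vX] := set0Pn _ Xn.
  have [x [y [Hxy xX yX]]] := crossing (str lt u v) uX vX.
  move: Hxy; rewrite /del_arcs => /andP[Axy]; rewrite /Y !inE /= Axy xX yX.
  by [].
have [Fs [FsB Fsd Fsc]] := link cut.
have hs : forall c j, c < m -> j < k -> nth d s (c * k + j) = nth d e j.
  move=> c j cm jk; rewrite nth_mkseq; last by nia.
  by rewrite modnMDl modn_small.
pose Bc c := \bigcup_(j < k) Fs (c * k + j).
pose y0 := nth d e 0.
exists (fun i : 'I_m => compC (Bc i) y0), (fun i : 'I_m => restrC (Bc i) y0); split.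
- move=> i; split; [split|split].
  + apply/subsetP => a; rewrite /restrC in_set => /andP[/bigcupP [j _ aF] _].
    exact: (subsetP (FsB _) _ aF).
  + by move=> a; rewrite /restrC in_set => /andP[].
  + move=> u v uC vC; apply: lift_strong => //.
    move: uC vC; rewrite !inE => /andP[_ uy] /andP[yv _].
    exact: connect_trans uy yv.
  + apply/subsetP => y yS.
    have ye : y \in e by rewrite /e mem_enum.
    have jk : index y e < k by rewrite -se index_mem.
    have ny : nth d e (index y e) = y by rewrite nth_index.
    rewrite inE; apply/andP; split.
      apply: (connect_mono (E := Fs (i * k + 0))).
        exact: (bigcup_sup (Ordinal k0)).
      rewrite /y0 -(hs i 0) //; apply: Fsc; rewrite ss; have := ltn_ord i; nia.
    apply: (connect_mono (E := Fs (i * k + index y e))).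
      exact: (bigcup_sup (Ordinal jk)).
    have := Fsc (i * k + index y e) d y0; rewrite hs // ny; apply; rewrite ss; have := ltn_ord i; nia.
- move=> i j ij; rewrite disjoint_subset; apply/subsetP => a.
  rewrite !inE => /andP[/bigcupP [j1 _ a1] _]; apply/negP => /andP[/bigcupP [j2 _ a2] _].
  have neq : i * k + j1 != j * k + j2.
    apply/eqP => H; have := congr1 (fun x => x %/ k) H => /=.
    rewrite !divnMDl // !divn_small // !addn0 => /val_inj ijE.
    by rewrite ijE eqxx in ij.
  have h1 : i * k + j1 < size s by rewrite ss; have := ltn_ord i; have := ltn_ord j1; nia.
  have h2 : j * k + j2 < size s by rewrite ss; have := ltn_ord j; have := ltn_ord j2; nia.
  have := Fsd _ _ h1 h2 neq.
  rewrite disjoint_subset => /subsetP /(_ a a1); rewrite inE a2.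
  by [].
Qed.
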